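(* Let $\mathcal{H}=\mathbb{C}^{d_1}$ with $d_1$ odd and $\mathcal{K}=\mathbb{C}^{d_2}$. Then every minimizer $U$ of $$\min\Big\{\frac1{d_1d_2}\operatorname{tr}\big[U\,\overline U^{T_2}\big]:\ U\in\mathcal{B}(\mathcal{H}\otimes\mathcal{K})\text{ unitary}\Big\}$$ has the property that $U\,\overline U^{T_2}$ is Hermitian.
   Context: The partial transpose $T_2$ is taken with respect to a fixed product basis, defined by linear extension of $(X\otimes Y)^{T_2}=X\otimes Y^T$; $\overline U$ is the entrywise complex conjugate, and $\overline U^{T_2}=(\overline U)^{T_2}$. *)

(* Defs.v *)
From HB Require Import structures.
From mathcomp Require Import all_boot all_order all_algebra.
From mathcomp Require Import reals.
From mathcomp Require Export complex mxtens sesquilinear spectral.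
Set Implicit Arguments. Unset Strict Implicit. Unset Printing Implicit Defensive.
Import Order.TTheory GRing.Theory Num.Theory Num.Def.
Local Open Scope ring_scope.

(* Operators on H (x) K with H = C^d1, K = C^d2 are matrices of size d1*d2,
   the product basis being indexed through mathcomp's [mxtens_index]
   (the convention of [tensmx], the Kronecker product). *)

Definition mxconj {C : numClosedFieldType} {m n : nat} (A : 'M[C]_(m, n)) :=
  map_mx conjC A.

(* partial transpose on the second factor:
   ((a,b),(c,d)) entry of A^{T_2} is the ((a,d),(c,b)) entry of A,
   i.e. the linear extension of (X *t Y)^{T_2} = X *t Y^T. *)
Definition ptrans2 {T : Type} {d1 d2 : nat} (A : 'M[T]_(d1 * d2)) : 'M[T]_(d1 * d2) :=
  \matrix_(i, j)
    A (mxtens_index ((mxtens_unindex i).1, (mxtens_unindex j).2))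
      (mxtens_index ((mxtens_unindex j).1, (mxtens_unindex i).2)).

Lemma ptrans2_tensmx (R : pzRingType) d1 d2 (X : 'M[R]_d1) (Y : 'M[R]_d2) :
  ptrans2 (X *t Y) = X *t Y^T.
Proof. by apply/matrixP => i j; rewrite !mxE !mxtens_indexK /=. Qed.

Definition objective {C : numClosedFieldType} (d1 d2 : nat) (U : 'M[C]_(d1 * d2)) : C :=
  ((d1 * d2)%:R)^-1 * \tr (U *m ptrans2 (mxconj U)).
Arguments objective {C} d1 d2 U.

(* Main.v *)
Require Import Defs.
From HB Require Import structures.
From mathcomp Require Import all_boot all_order all_algebra.
From mathcomp Require Import reals complex mxtens sesquilinear spectral.
From mathcomp Require Import ring lra.
Import Order.TTheory GRing.Theory Num.Theory Num.Def.
Set Implicit Arguments. Unset Strict Implicit. Unset Printing Implicit Defensive.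
Local Open Scope ring_scope.

Lemma conjCE (R : realType) (x : R[i]) : x^* = (x^*)%C.
Proof. by []. Qed.

Lemma scalar_key (R : realType) (a c : R[i]) : c^* = c ->
  (forall m : R[i], m + m^* + m * m^* = 0 -> 0 <= m * a + m^* * a^* + m * m^* * c) ->
  a^* = a.
Proof.
move=> hc H.
pose z := a - c.
have Hz : forall m : R[i], m + m^* + m * m^* = 0 -> 0 <= m * z + (m * z)^*.
  move=> m hm; have := H m hm.
  have -> : m * a + m^* * a^* + m * m^* * c = m * z + (m * z)^* + (m + m^* + m * m^*) * c.
    by rewrite /z rmorphM rmorphB /= hc; ring.
  by rewrite hm mul0r addr0.
suff : z^* = z.
  by rewrite /z rmorphB /= hc => /eqP; rewrite subr_eq subrK => /eqP.
move: Hz; rewrite /z; case: (a - c) => x y Hz.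
pose t := y / (1 + x ^+ 2).
have h1 : 0 < 1 + x ^+ 2 by rewrite ltr_pwDl // sqr_ge0.
have h2 : 0 < 1 + t ^+ 2 by rewrite ltr_pwDl // sqr_ge0.
pose p := - (2 * t ^+ 2) / (1 + t ^+ 2).
pose q := 2 * t / (1 + t ^+ 2).
have := Hz (Complex p q).
rewrite !conjCE; simpc.
have ht : t * (1 + x ^+ 2) = y by rewrite /t mulrVK // unitfE gt_eqF.
have hpq : p + p + (p * p + q * q) = 0.
  rewrite /p /q; field; by rewrite gt_eqF.
have hqp : - (p * q) + q * p = 0 by rewrite mulrC addNr.
rewrite hpq hqp => /(_ erefl) /= hle.
have hpx : p * x - q * y = (- (t ^+ 2 * x) - t * y) * (2 / (1 + t ^+ 2)).
  rewrite /p /q; field; by rewrite gt_eqF.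
have h3 : 0 <= - (t ^+ 2 * x) - t * y.
  have hP : 0 <= p * x - q * y by lra.
  have h4 : 0 < 2 / (1 + t ^+ 2) by rewrite divr_gt0.
  by move: hP; rewrite hpx pmulr_lge0.
have hy : y = 0.
  have h5 : 0 <= - (y ^+ 2 * (1 + x + x ^+ 2)).
    have -> : - (y ^+ 2 * (1 + x + x ^+ 2)) = (- (t ^+ 2 * x) - t * y) * (1 + x ^+ 2) ^+ 2.
      rewrite -ht; ring.
    by apply: mulr_ge0 => //; rewrite exprn_ge0 // ltW.
  have h6 : 0 < 1 + x + x ^+ 2 by nra.
  have h7 : y ^+ 2 <= 0.
    have h8 : y ^+ 2 * (1 + x + x ^+ 2) <= 0 by lra.
    by rewrite pmulr_lle0 in h8.
  have : y ^+ 2 == 0.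
    by rewrite eq_le h7 sqr_ge0.
  by rewrite sqrf_eq0 => /eqP.
by rewrite hy oppr0.
Qed.
Section B.
Variables (C : numClosedFieldType) (d1 d2 : nat).
Local Notation n := (d1 * d2)%N.
Implicit Types X Y : 'M[C]_n.

Definition Bf X Y := \tr (X *m ptrans2 (mxconj Y)).

Lemma pcD Y1 Y2 : ptrans2 (mxconj (Y1 + Y2)) = ptrans2 (mxconj Y1) + ptrans2 (mxconj Y2).
Proof. by apply/matrixP => i j; rewrite !mxE rmorphD. Qed.

Lemma pcZ a Y : ptrans2 (mxconj (a *: Y)) = a^* *: ptrans2 (mxconj Y).
Proof. by apply/matrixP => i j; rewrite !mxE rmorphM. Qed.

Lemma BfDl X1 X2 Y : Bf (X1 + X2) Y = Bf X1 Y + Bf X2 Y.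
Proof. by rewrite /Bf mulmxDl mxtraceD. Qed.
Lemma BfZl a X Y : Bf (a *: X) Y = a * Bf X Y.
Proof. by rewrite /Bf -scalemxAl mxtraceZ. Qed.
Lemma BfDr X Y1 Y2 : Bf X (Y1 + Y2) = Bf X Y1 + Bf X Y2.
Proof. by rewrite /Bf pcD mulmxDr mxtraceD. Qed.
Lemma BfZr a X Y : Bf X (a *: Y) = a^* * Bf X Y.
Proof. by rewrite /Bf pcZ -scalemxAr mxtraceZ. Qed.

Definition phi (p : 'I_n * 'I_n) : 'I_n * 'I_n :=
  (mxtens_index ((mxtens_unindex p.2).1, (mxtens_unindex p.1).2),
   mxtens_index ((mxtens_unindex p.1).1, (mxtens_unindex p.2).2)).

Lemma phiK : involutive phi.
Proof.
case=> i j; rewrite /phi !mxtens_indexK /=.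
by congr (_, _); apply: mxtens_unindexK.
Qed.

Lemma BfE X Y : Bf X Y = \sum_p X p.1 p.2 * (Y (phi p).1 (phi p).2)^*.
Proof.
rewrite /Bf /mxtrace.
under eq_bigr => i _ do rewrite mxE.
rewrite pair_bigA /=; apply: eq_bigr => -[i j] _ /=.
by rewrite !mxE.
Qed.

Lemma Bf_herm X Y : Bf Y X = (Bf X Y)^*.
Proof.
rewrite !BfE rmorph_sum (reindex_inj (can_inj phiK)).
by apply: eq_bigr => p _; rewrite phiK rmorphM /= conjCK mulrC.
Qed.
End B.
Section Q.
Variables (C : numClosedFieldType) (n : nat).

Definition qf (W : 'M[C]_n) (v : 'I_n -> C) := \sum_k \sum_l (v k)^* * W k l * v l.

Lemma sum_delta (F : 'I_n -> C) i : \sum_k (k == i)%:R * F k = F i.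
Proof.
rewrite (bigD1 i) //= eqxx mul1r big1 ?addr0 // => k /negbTE ->; by rewrite mul0r.
Qed.

Definition v2 i j (a b : C) (k : 'I_n) : C := a * (k == i)%:R + b * (k == j)%:R.

Lemma sum_v2 i j a b (F : 'I_n -> C) : \sum_k v2 i j a b k * F k = a * F i + b * F j.
Proof.
rewrite /v2; under eq_bigr => k _ do rewrite mulrDl -!mulrA.
by rewrite big_split /= -!big_distrr /= !sum_delta.
Qed.

Lemma conj_v2 i j a b k : (v2 i j a b k)^* = v2 i j a^* b^* k.
Proof. by rewrite /v2 rmorphD !rmorphM /= !rmorph_nat. Qed.

Lemma qf_v2 W i j a b : qf W (v2 i j a b) =
  a^* * (a * W i i + b * W i j) + b^* * (a * W j i + b * W j j).
Proof.
rewrite /qf; under eq_bigr => k _ do (under eq_bigr => l _ do rewrite -mulrA [W k l * _]mulrC; rewrite -big_distrr /= sum_v2 conj_v2).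
rewrite sum_v2; ring.
Qed.

Lemma norm_v2 i j a b : i != j -> \sum_k (v2 i j a b k)^* * v2 i j a b k = a^* * a + b^* * b.
Proof.
move=> ij; under eq_bigr => k _ do rewrite conj_v2 mulrC.
rewrite sum_v2 /v2 eqxx (negbTE ij) eq_sym (negbTE ij) eqxx.
have -> : (true%:R : C) = 1 by []. have -> : (false%:R : C) = 0 by []. ring.
Qed.

Lemma norm_v2' i a : \sum_k (v2 i i a 0 k)^* * v2 i i a 0 k = a^* * a.
Proof.
under eq_bigr => k _ do rewrite conj_v2 mulrC.
rewrite sum_v2 /v2 eqxx. have -> : (true%:R : C) = 1 by []. ring.
Qed.

Lemma herm_from_q (W : 'M[C]_n) :
  (forall v, \sum_k (v k)^* * v k = 1 -> qf W v \is Num.real) ->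
  forall i j, W i j = (W j i)^*.
Proof.
move=> H.
have Hd : forall i, W i i \is Num.real.
  move=> i; have hn : \sum_k (v2 i i 1 0 k)^* * v2 i i 1 0 k = 1 by rewrite norm_v2' conjC1 mulr1.
  have := H _ hn; rewrite qf_v2 conjC1 conjC0 !mul0r !mul1r !addr0 //.
move=> i j; case: (eqVneq i j) => [<-|ij].
  by have /CrealP -> := Hd i.
pose a : C := 3%:R / 5%:R; pose b : C := 4%:R / 5%:R.
have n5 : (5%:R : C) != 0 by rewrite pnatr_eq0.
have ra : a \is Num.real by rewrite /a rpred_div ?rpred_nat.
have rb : b \is Num.real by rewrite /b rpred_div ?rpred_nat.
have ca : a^* = a by apply/CrealP.
have cb : b^* = b by apply/CrealP.
have a0 : a != 0 by rewrite /a mulf_neq0 ?invr_eq0 // pnatr_eq0.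
have b0 : b != 0 by rewrite /b mulf_neq0 ?invr_eq0 // pnatr_eq0.
have ii : 'i * 'i = -1 :> C by exact: mulCii.
have hab : \sum_k (v2 i j a b k)^* * v2 i j a b k = 1.
  by rewrite norm_v2 // ca cb /a /b; field.
have hab2 : \sum_k (v2 i j a (b * 'i) k)^* * v2 i j a (b * 'i) k = 1.
  rewrite norm_v2 // ca rmorphM /= cb conjCi.
  have -> : b * - 'i * (b * 'i) = - (b * b) * ('i * 'i) by ring.
  by rewrite ii /a /b; field.
have q1 := H _ hab; have q2 := H _ hab2.
rewrite qf_v2 ca cb in q1.
rewrite qf_v2 ca rmorphM /= cb conjCi in q2.
pose s := W i j + W j i; pose t := 'i * (W i j - W j i).
have hs : s \is Num.real.
  have -> : s = (a * (a * W i i + b * W i j) + b * (a * W j i + b * W j j)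
                 - a * a * W i i - b * b * W j j) / (a * b).
    by rewrite /s; field; rewrite b0 a0.
  apply: rpred_div; first apply: rpredB; first apply: rpredB => //.
  all: rewrite ?rpredM ?Hd ?rpredV ?rpred_nat //.
have ht : t \is Num.real.
  have -> : t = (a * (a * W i i + b * 'i * W i j) + b * - 'i * (a * W j i + b * 'i * W j j)
                 - a * a * W i i - b * b * W j j) / (a * b).
    apply: (mulIf (mulf_neq0 a0 b0)); rewrite divfK ?(mulf_neq0 a0 b0) //.
    have e : a * (a * W i i + b * 'i * W i j) + b * - 'i * (a * W j i + b * 'i * W j j)
                 - a * a * W i i - b * b * W j j
           = a * b * ('i * (W i j - W j i)) - b * b * W j j * ('i * 'i + 1) by ring.
    by rewrite e ii addNr mulr0 subr0 /t mulrC.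
  apply: rpred_div; first apply: rpredB; first apply: rpredB => //.
  all: rewrite ?rpredM ?Hd ?rpredV ?rpred_nat //.
have e1 : 2%:R * W i j = s - 'i * t.
  have -> : s - 'i * t = W i j + W j i - ('i * 'i) * (W i j - W j i) by rewrite /s /t; ring.
  rewrite ii; ring.
have e2 : 2%:R * W j i = s + 'i * t.
  have -> : s + 'i * t = W i j + W j i + ('i * 'i) * (W i j - W j i) by rewrite /s /t; ring.
  rewrite ii; ring.
clearbody s t.
have e3 : 2%:R * (W j i)^* = s - 'i * t.
  have := congr1 conjC e2; rewrite rmorphD !rmorphM /= rmorph_nat conjCi.
  by rewrite (CrealP hs) (CrealP ht) mulNr.
apply: (mulfI (_ : (2%:R : C) != 0)); first by rewrite pnatr_eq0.
by rewrite e1 e3.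
Qed.
End Q.

Section Main.
Local Open Scope sesquilinear_scope.
Variables (C : numClosedFieldType) (n : nat).

Lemma P_unitary (v : 'I_n -> C) (m : C) :
  \sum_k (v k)^* * v k = 1 -> m + m^* + m * m^* = 0 ->
  (1%:M + m *: (\matrix_(k, l) (v k * (v l)^*)) : 'M[C]_n) \is unitarymx.
Proof.
move=> hv hm; set E := \matrix_(k, l) (v k * (v l)^*).
have EE : E *m E = E.
  apply/matrixP => i j; rewrite !mxE.
  transitivity (v i * (v j)^* * \sum_k ((v k)^* * v k)); last by rewrite hv mulr1.
  rewrite big_distrr; apply: eq_bigr => k _; rewrite !mxE /=; ring.
have Et : (1%:M + m *: E)^t* = 1%:M + m^* *: E.
  apply/matrixP => i j; rewrite !mxE rmorphD /= rmorphMn rmorph1 rmorphM /= rmorphM /= conjCK eq_sym; ring.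
apply/unitarymxP; rewrite Et mulmxDl !mulmxDr mul1mx mulmx1 mul1mx -scalemxAl -scalemxAr EE scalerA.
rewrite -addrA.
have -> : m^* *: E + (m *: E + (m * m^*) *: E) = (m + m^* + m * m^*) *: E.
  by rewrite !scalerDl addrA [m^* *: E + _]addrC.
by rewrite hm scale0r addr0.
Qed.
End Main.

Local Open Scope sesquilinear_scope.

Theorem proposition9 (R : realType) (d1 d2 : nat) (hd1 : odd d1) (hd2 : (0 < d2)%N)
  (U : 'M[R[i]]_(d1 * d2)) :
  U \is unitarymx ->
  (forall V : 'M[R[i]]_(d1 * d2), V \is unitarymx -> objective d1 d2 U <= objective d1 d2 V) ->
  U *m ptrans2 (mxconj U) \is hermsymmx.
Proof.
move=> hU hmin.
have n0 : (0 < d1 * d2)%N by rewrite muln_gt0 hd2 andbT odd_gt0.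
set W := U *m ptrans2 (mxconj U).
suff hh : forall i j, W i j = (W j i)^*.
  by apply/is_hermitianmxP; rewrite expr0 scale1r; apply/matrixP => i j; rewrite {1}hh !mxE.
apply: herm_from_q => v hv.
set E := \matrix_(k, l) (v k * (v l)^*) : 'M[R[i]]_(d1 * d2).
pose a := Bf (E *m U) U; pose c := Bf (E *m U) (E *m U).
have hc : c^* = c by rewrite /c -Bf_herm.
have ob : forall X, objective d1 d2 X = ((d1 * d2)%:R)^-1 * Bf X X by [].
have key : forall m : R[i], m + m^* + m * m^* = 0 -> 0 <= m * a + m^* * a^* + m * m^* * c.
  move=> m hm; have hV := mul_unitarymx (P_unitary hv hm) hU.
  have := hmin _ hV; rewrite !ob ler_pM2l ?invr_gt0 ?ltr0n //.
  have -> : (1%:M + m *: E) *m U = U + m *: (E *m U) by rewrite mulmxDl mul1mx scalemxAl.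
  rewrite BfDl !BfDr !BfZl !BfZr -(Bf_herm (E *m U) U) -/a -/c -subr_ge0.
  have -> : Bf U U + m^* * Bf U (E *m U) + (m * Bf (E *m U) U + m * (m^* * Bf (E *m U) (E *m U))) - Bf U U
    = m * a + m^* * a^* + m * m^* * c by rewrite /a /c -(Bf_herm (E *m U) U); ring.
  by rewrite (Bf_herm (E *m U) U).
have ha := scalar_key hc key.
have hq : qf W v = \tr (E *m W).
  rewrite /qf /mxtrace exchange_big; apply: eq_bigr => l _; rewrite mxE.
  by apply: eq_bigr => k _; rewrite !mxE /=; ring.
rewrite hq /W mulmxA; apply/CrealP; exact: ha.
Qed.
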